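(* Let $d_{\sf A},d_{\sf B}\geq2$ be integers, $d=d_{\sf A}d_{\sf B}$, and embed $\mathrm{SU}(d_{\sf A})\times\mathrm{SU}(d_{\sf B})$ in $\mathrm{SU}(d)$ via $(U_{\sf A},U_{\sf B})\mapsto U_{\sf A}\otimes U_{\sf B}$. For a non-negative integer $j$ let $\mathcal D^d_j$ be the irreducible representation of $\mathrm{SU}(d)$ labelled by the Young diagram $(2j,j^{d-2})$. If the restrictions of $\mathcal D^d_j$ and of $\mathcal D^d_2$ to $\mathrm{SU}(d_{\sf A})\times\mathrm{SU}(d_{\sf B})$ each contain the representation $1^{d_{\sf A}}\boxtimes1^{d_{\sf B}}$, then so does the restriction of $\mathcal D^d_{j+2}$.
   Context: The Young diagram $(2j,j^{d-2})$ has a first row of $2j$ boxes followed by $d-2$ rows of $j$ boxes each. Irreducible representations of $\mathrm{SU}(k)$ are labelled by Young diagrams with at most $k$ rows. $1^k$ denotes the trivial representation of $\mathrm{SU}(k)$ and $\boxtimes$ the outer tensor product representation of the product group. *)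

(* Defs.v *)
From HB Require Import structures.
From mathcomp Require Import all_boot all_order all_algebra all_fingroup.
From mathcomp Require Import reals.
From mathcomp Require Import complex mxtens.
Set Implicit Arguments. Unset Strict Implicit. Unset Printing Implicit Defensive.
Import Order.TTheory GRing.Theory Num.Theory.
Local Open Scope ring_scope.

(* Tensors in (K^d)^{(x) n}: functions from multi-indices 'I_n -> 'I_d to K. *)
Definition midx (n d : nat) := {ffun 'I_n -> 'I_d}.

Definition tens_act {K : comNzRingType} {n d : nat} (M : 'M[K]_d)
  (v : midx n d -> K) : midx n d -> K :=
  fun i => \sum_(j : midx n d) (\prod_(k < n) M (i k) (j k)) * v j.

Definition perm_act {K : Type} {n d : nat} (s : 'S_n) (v : midx n d -> K)
  : midx n d -> K :=
  fun i => v [ffun k => i (s k)].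

(* Young diagrams given by their row lengths lam (a seq nat), filled with    *)
(* 0 .. |lam|-1 row by row (the standard row-reading tableau).               *)
Definition rowof (lam : seq nat) (k : nat) : nat :=
  find (fun r => k < sumn (take r.+1 lam))%N (iota 0 (size lam)).
Definition colof (lam : seq nat) (k : nat) : nat :=
  (k - sumn (take (rowof lam k) lam))%N.

Definition row_group (lam : seq nat) : {set 'S_(sumn lam)} :=
  [set s : 'S_(sumn lam) | [forall k, rowof lam (s k) == rowof lam k]].
Definition col_group (lam : seq nat) : {set 'S_(sumn lam)} :=
  [set s : 'S_(sumn lam) | [forall k, colof lam (s k) == colof lam k]].

Definition young_sym {K : comNzRingType} (lam : seq nat) {d : nat}
  (v : midx (sumn lam) d -> K) : midx (sumn lam) d -> K :=
  fun i => \sum_(p in row_group lam) \sum_(q in col_group lam)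
             (-1) ^+ (odd_perm q) * perm_act p (perm_act q v) i.

(* Weyl's construction: the irreducible SU(d)-module with Young diagram lam  *)
(* (at most d rows) is the image  S_lam = c_lam . (C^d)^{(x) |lam|}  with     *)
(* U acting as U^{(x) |lam|}.                                                *)

Definition SU {R : realType} (n : nat) : {pred 'M[R[i]]_n} :=
  [pred U : 'M[R[i]]_n | (U *m (map_mx Num.conj U)^T == 1%:M) && (\det U == 1)].

Definition diagD (d j : nat) : seq nat := (2 * j)%N :: nseq (d - 2) j.

(* The restriction of the SU(dA*dB)-irrep with diagram lam to               *)
(*  SU(dA) x SU(dB) (embedded via (UA,UB) |-> UA (x) UB) contains the trivial *)
(*  representation 1^{dA} [x] 1^{dB}:  S_lam contains a nonzero vector fixed *)
(*  by every (UA (x) UB)^{(x) |lam|}.                                        *)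
Definition restr_contains_trivial (R : realType) (dA dB : nat) (lam : seq nat)
  : Prop :=
  exists v : midx (sumn lam) (dA * dB) -> R[i],
    (exists i, @young_sym _ lam _ v i != 0) /\
    forall (UA : 'M[R[i]]_dA) (UB : 'M[R[i]]_dB),
      UA \in @SU R dA -> UB \in @SU R dB ->
      forall i, tens_act (UA *t UB) (@young_sym _ lam _ v) i = @young_sym _ lam _ v i.

(* Main.v *)
Require Import Defs.
From HB Require Import structures.
From mathcomp Require Import all_boot all_order all_algebra all_fingroup.
From mathcomp Require Import reals complex mxtens.
From mathcomp Require Import mpoly.
From mathcomp Require Import zify.
Set Implicit Arguments. Unset Strict Implicit. Unset Printing Implicit Defensive.
Import Order.TTheory GRing.Theory Num.Theory.

Module Dev.
Local Open Scope ring_scope.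

Section Gen.
Variable K : numClosedFieldType.
Variables n d : nat.
Implicit Types (i j : midx n d) (p q : 'S_n) (x y : midx n d -> K).

Definition pim i p : midx n d := [ffun k => i (p k)].

Lemma pimM i p q : pim (pim i p) q = pim i (q * p)%g.
Proof. by apply/ffunP => k; rewrite !ffunE permM. Qed.

Lemma pim1 i : pim i 1 = i.
Proof. by apply/ffunP => k; rewrite !ffunE perm1. Qed.

Lemma pimK p : cancel (pim^~ p) (pim^~ (p^-1)%g).
Proof. by move=> i; rewrite pimM mulVg pim1. Qed.

Lemma pimKV p : cancel (pim^~ (p^-1)%g) (pim^~ p).
Proof. by move=> i; rewrite pimM mulgV pim1. Qed.

Lemma pim_bij p : bijective (pim^~ p).
Proof. by exists (pim^~ (p^-1)%g); [apply: pimK | apply: pimKV]. Qed.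

Definition Wop (G : {set 'S_n}) (w : 'S_n -> K) x : midx n d -> K :=
  fun i => \sum_(p in G) w p * x (pim i p).

Definition sgn p : K := (-1) ^+ odd_perm p.

Definition ip x y : K := \sum_i x i * (y i)^*.

Lemma sum_group_mulr (G : {group 'S_n}) p (F : 'S_n -> K) : p \in G ->
  \sum_(q in G) F q = \sum_(q in G) F (q * p)%g.
Proof.
move=> pG; rewrite (reindex_inj (mulIg p)) /=.
by apply: eq_bigl => q; rewrite groupMr.
Qed.

Lemma sum_group_inv (G : {group 'S_n}) (F : 'S_n -> K) :
  \sum_(q in G) F q = \sum_(q in G) F (q^-1)%g.
Proof.
rewrite (reindex_inj invg_inj) /=.
by apply: eq_bigl => q; rewrite groupV.
Qed.

Section W.
Variable G : {group 'S_n}.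
Variable w : 'S_n -> K.
Hypothesis wM : forall p q, w (p * q)%g = w p * w q.
Hypothesis w2 : forall p, w p * w p = 1.
Hypothesis wc : forall p, (w p)^* = w p.

Lemma w1 : w 1%g = 1.
Proof.
have h : w 1%g = w 1%g * w 1%g by rewrite -wM mulg1.
by rewrite -(w2 1%g) -h.
Qed.

Lemma wV p : w (p^-1)%g = w p.
Proof.
have h : w p * w (p^-1)%g = 1 by rewrite -wM mulgV w1.
by rewrite -[LHS]mul1r -(w2 p) -mulrA h mulr1.
Qed.

Lemma Wop_ext x y : (forall i, x i = y i) -> forall i, Wop G w x i = Wop G w y i.
Proof. by move=> h i; apply: eq_bigr => p _; rewrite h. Qed.

Lemma Wop_pim x i p : p \in G -> Wop G w x (pim i p) = w p * Wop G w x i.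
Proof.
move=> pG; rewrite /Wop (sum_group_mulr _ (groupVr pG)) mulr_sumr.
apply: eq_bigr => q _; rewrite pimM -mulgA mulVg mulg1 wM wV mulrA.
by rewrite [w q * _]mulrC.
Qed.

Lemma Wop_Wop x i : Wop G w (Wop G w x) i = #|G|%:R * Wop G w x i.
Proof.
rewrite {1}/Wop (eq_bigr (fun _ => Wop G w x i)); last first.
  by move=> p pG; rewrite Wop_pim // mulrA w2 mul1r.
by rewrite sumr_const mulr_natl.
Qed.

Lemma Wop_adj x y : ip (Wop G w x) y = ip x (Wop G w y).
Proof.
rewrite /ip /Wop.
under eq_bigr do rewrite mulr_suml.
rewrite exchange_big /=.
under [RHS]eq_bigr => i _ do rewrite raddf_sum mulr_sumr.
rewrite [RHS]exchange_big /= [RHS](sum_group_inv G).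
apply: eq_bigr => p pG.
rewrite (reindex (pim^~ (p^-1)%g) (onW_bij _ (pim_bij _))) /=.
apply: eq_bigr => i _; rewrite pimKV rmorphM /= wc wV.
by rewrite mulrCA mulrA.
Qed.

End W.

Lemma ip_eq0 x : ip x x = 0 -> forall i, x i = 0.
Proof.
move=> h i; apply/eqP; rewrite -normr_eq0 -sqrf_eq0 normCK.
apply/eqP; move: h; rewrite /ip => h.
apply: (psumr_eq0P _ h) => // k _.
by rewrite -normCK exprn_ge0.
Qed.

Lemma ipZr x y (c : K) : ip x (fun i => c * y i) = c^* * ip x y.
Proof.
by rewrite /ip mulr_sumr; apply: eq_bigr => i _; rewrite rmorphM mulrCA.
Qed.

Lemma ip_ext x x' y y' : (forall i, x i = x' i) -> (forall i, y i = y' i) ->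
  ip x y = ip x' y'.
Proof. by move=> h1 h2; apply: eq_bigr => i _; rewrite h1 h2. Qed.

Lemma ip0r x y : (forall i, y i = 0) -> ip x y = 0.
Proof. by move=> h; apply: big1 => i _; rewrite h rmorph0 mulr0. Qed.

Lemma Wop_tens (G : {group 'S_n}) w (M : 'M[K]_d) x i :
  tens_act M (Wop G w x) i = Wop G w (tens_act M x) i.
Proof.
rewrite /tens_act /Wop.
under eq_bigr do rewrite mulr_sumr.
rewrite exchange_big /=; apply: eq_bigr => p pG.
rewrite mulr_sumr.
rewrite (reindex (pim^~ (p^-1)%g) (onW_bij _ (pim_bij _))) /=.
apply: eq_bigr => j _; rewrite pimKV mulrCA; congr (_ * (_ * _)).
rewrite (reindex_inj (@perm_inj _ p)) /=.
by apply: eq_bigr => k _; rewrite !ffunE permK.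
Qed.

Lemma tens_ext (M : 'M[K]_d) x y : (forall i, x i = y i) ->
  forall i, tens_act M x i = tens_act M y i.
Proof. by move=> h i; apply: eq_bigr => j _; rewrite h. Qed.

End Gen.

Section Groups.
Variable n : nat.
Definition kgroup (kap : nat -> nat) : {set 'S_n} :=
  [set s : 'S_n | [forall k, kap (s k) == kap k]].

Lemma kgroupP (kap : nat -> nat) (s : 'S_n) : reflect (forall k, kap (s k) = kap k) (s \in kgroup kap).
Proof.
rewrite inE; apply: (iffP forallP) => h k; first exact/eqP.
exact/eqP.
Qed.

Lemma kgroup_set (kap : nat -> nat) : group_set (kgroup kap).
Proof.
apply/andP; split; first by apply/kgroupP => k; rewrite perm1.
apply/subsetP => s /imset2P [a b /kgroupP ha /kgroupP hb ->].
by apply/kgroupP => k; rewrite permM hb ha.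
Qed.

Canonical kgroupG (kap : nat -> nat) := Group (kgroup_set kap).
End Groups.

Section Sign.
Variable K : numClosedFieldType.
Variable n : nat.
Lemma sgnM (p q : 'S_n) : sgn K (p * q)%g = sgn K p * sgn K q.
Proof. by rewrite /sgn odd_permM signr_addb. Qed.
Lemma sgn2 (p : 'S_n) : sgn K p * sgn K p = 1.
Proof. by rewrite /sgn -expr2 sqrr_sign. Qed.
Lemma sgnc (p : 'S_n) : (sgn K p)^* = sgn K p.
Proof. by rewrite /sgn rmorph_sign. Qed.
Lemma oneM (p q : 'S_n) : (fun _ : 'S_n => 1 : K) (p * q)%g = 1 * 1.
Proof. by rewrite mulr1. Qed.
End Sign.

Section Nonvanish.
Variable K : numClosedFieldType.
Variables n d : nat.
Variables GR GC : {group 'S_n}.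
Local Notation A := (@Wop K n d GR (fun _ => 1)).
Local Notation B := (@Wop K n d GC (@sgn K n)).

Lemma ipZl (x y : midx n d -> K) (c : K) : ip (fun i => c * x i) y = c * ip x y.
Proof. by rewrite /ip mulr_sumr; apply: eq_bigr => i _; rewrite mulrA. Qed.

Lemma ip0l (x y : midx n d -> K) : (forall i, x i = 0) -> ip x y = 0.
Proof. by move=> h; apply: big1 => i _; rewrite h mul0r. Qed.

Let oneP : forall p q : 'S_n, (fun _ => 1 : K) (p * q)%g = 1 * 1.
Proof. by move=> *; rewrite mulr1. Qed.
Let one2 : forall p : 'S_n, (fun _ => 1 : K) p * 1 = 1.
Proof. by move=> *; rewrite mulr1. Qed.
Let onec : forall p : 'S_n, ((fun _ => 1 : K) p)^* = 1.
Proof. by move=> *; rewrite rmorph1. Qed.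

Lemma nonvanish (v : midx n d -> K) i0 : A (B v) i0 != 0 ->
  exists i, A (B (A (B v))) i != 0.
Proof.
move=> ne.
set t := A (B v).
have At i : A t i = #|GR|%:R * t i by rewrite /t Wop_Wop.
have nR : (#|GR|%:R : K) != 0 by rewrite pnatr_eq0 -lt0n cardG_gt0.
have nC : (#|GC|%:R : K) != 0 by rewrite pnatr_eq0 -lt0n cardG_gt0.
have c1 : ~ (forall i, B t i = 0).
  move=> h; move/negP: ne; apply; apply/eqP; apply: (ip_eq0 (x := t)).
  rewrite {1}/t Wop_adj //.
  rewrite (ip_ext (x' := B v) (y' := fun i => #|GR|%:R * t i)) //.
  by rewrite ipZr Wop_adj ?(ip0r _ h) ?mulr0 //; [apply: sgnM|apply: sgn2|apply: sgnc].
case: (boolP [exists i, A (B t) i != 0]) => [/existsP //|/existsPn h].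
exfalso.
have h' : forall i, A (B t) i = 0 by move=> i; apply/eqP; rewrite -[_ == _]negbK h.
have : ip (A (B t)) t = 0 by apply: ip0l.
rewrite Wop_adj //.
rewrite (ip_ext (x' := B t) (y' := fun i => #|GR|%:R * t i)) // ipZr conjC_nat.
move/eqP; rewrite mulf_eq0 (negbTE nR) /= => /eqP h2.
apply: c1; apply: ip_eq0.
rewrite -Wop_adj; [|apply: sgnM|apply: sgn2|apply: sgnc].
rewrite (ip_ext (x' := fun i => #|GC|%:R * B t i) (y' := t)) //.
  by rewrite ipZl h2 mulr0.
by move=> i; rewrite Wop_Wop //; [apply: sgnM|apply: sgn2].
Qed.
End Nonvanish.

Section Decomp.
Local Open Scope group_scope.
Variable T : finType.
Variable kap : T -> nat.

Lemma kperm_decomp (s : {perm T}) : (forall x, kap (s x) = kap x) ->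
  exists ts : seq (T * T), s = \prod_(t <- ts) tperm t.1 t.2 /\
    all (fun t => (t.1 != t.2) && (kap t.1 == kap t.2)) ts.
Proof.
have [n] := ubnP #|[pred x | s x != x]|; elim: n s => // n IHn s /ltnSE-le_s_n ks.
case: (pickP (fun x => s x != x)) => [x s_x | s_id]; last first.
  exists nil; split => //; rewrite big_nil; apply/permP=> x.
  by apply/eqP/idPn; rewrite perm1 s_id.
have kx : kap (s^-1 x) = kap x by rewrite -{2}(permKV s x) ks.
have ks' : forall y, kap ((tperm x (s^-1 x) * s) y) = kap y.
  move=> y; rewrite permM ks; case: tpermP => [->|->|] //.
have le' : (#|[pred y | ((tperm x (s^-1 x) * s)%g) y != y]| < n)%N.
  rewrite (cardD1 x) !inE s_x in le_s_n; apply: leq_ltn_trans le_s_n.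
  apply: subset_leq_card; apply/subsetP=> y.
  rewrite !inE permM permE /= -(canF_eq (permK _)).
  have [-> | ne_yx] := eqVneq y x; first by rewrite permKV eqxx.
  by case: (s y =P x) => // -> _; rewrite eq_sym.
have [ts [def_s ne_ts]] := IHn _ le' ks'.
exists ((x, s^-1 x) :: ts); split.
  by rewrite big_cons -def_s mulgA tperm2 mul1g.
by rewrite /= -(canF_eq (permK _)) s_x kx eqxx.
Qed.
End Decomp.

Section Antisym.
Variable K : numClosedFieldType.
Variables n d : nat.
Variable kap : nat -> nat.
Variable y : midx n d -> K.
Hypothesis hy : forall a b : 'I_n, a != b -> kap a = kap b ->
  forall i, y (pim i (tperm a b)) = - y i.

Lemma antisym_all q i : q \in kgroup n kap -> y (pim i q) = sgn K q * y i.
Proof.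
move=> /kgroupP kq.
have [ts [-> al]] := kperm_decomp kq.
rewrite /sgn odd_perm_prod; last first.
  by apply/allP => t /(allP al) /andP [].
rewrite signr_odd.
elim: ts al i => [|t ts IH] /=; first by move=> _ i; rewrite big_nil pim1 mul1r.
move=> /andP [/andP [ne /eqP kt] al] i.
by rewrite big_cons -pimM hy // IH // exprS mulN1r mulNr.
Qed.
End Antisym.

Lemma count_enum_card (T : finType) (P : pred T) : count P (enum T) = #|P|.
Proof. by rewrite cardE size_filter enumT. Qed.
Lemma count_fenum_card (T : finType) (P : pred T) :
  count P (Finite.enum T) = #|P|.
Proof. by rewrite -enumT count_enum_card. Qed.
Lemma card_sumb (n : nat) (b : 'I_n -> bool) :
  (\sum_(k < n) (b k : nat))%N = #|[pred k | b k]|.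
Proof.
rewrite -sum1_card [RHS]big_mkcond /=; apply: eq_bigr => k _; rewrite inE.
by case: (b k).
Qed.

Section Psi.
Variable K : numClosedFieldType.
Variables d Mb : nat.
Definition NV := #|{: 'I_Mb.+1 * 'I_d}|.
Definition var (r : nat) (x : 'I_d) : 'I_NV :=
  enum_rank ((inord r : 'I_Mb.+1), x).
Definition mono n (kap : nat -> nat) (i : midx n d) : 'X_{1..NV} :=
  \big[mnm_add/mnm0]_(k < n) mnm1 (var (kap k) (i k)).
Definition Psi n kap (x : midx n d -> K) : {mpoly K[NV]} :=
  \sum_i x i *: 'X_[mono kap i].

Variable n : nat.
Variable kap : nat -> nat.
Hypothesis hk : forall k, (kap k <= Mb)%N.
Implicit Types (x y : midx n d -> K) (i : midx n d).

Lemma mono_pim i p : p \in kgroup n kap -> mono kap (pim i p) = mono kap i.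
Proof.
move/kgroupP => kp; rewrite /mono [RHS](reindex_inj (@perm_inj _ p)) /=.
by apply: eq_bigr => k _; rewrite ffunE kp.
Qed.

Lemma Psi_ext x y : (forall i, x i = y i) -> Psi kap x = Psi kap y.
Proof. by move=> h; apply: eq_bigr => i _; rewrite h. Qed.

Lemma Psi_scale (c : K) x : Psi kap (fun i => c * x i) = c *: Psi kap x.
Proof. by rewrite /Psi scaler_sumr; apply: eq_bigr => i _; rewrite scalerA. Qed.

Lemma Psi_sym x :
  Psi kap (Wop (kgroupG n kap) (fun _ => 1) x) = #|kgroup n kap|%:R *: Psi kap x.
Proof.
rewrite /Psi /Wop.
under eq_bigr do rewrite scaler_suml.
rewrite exchange_big /= scaler_nat -sumr_const.
apply: eq_bigr => p pG.
rewrite (reindex (fun j : midx n d => pim j (p^-1)%g) (onW_bij _ (@pim_bij n d _))) /=.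
apply: eq_bigr => i _; rewrite pimKV mul1r mono_pim //.
by rewrite groupV.
Qed.

Lemma mono_count i v :
  (mono kap i) v = #|[pred k : 'I_n | var (kap k) (i k) == v]|.
Proof.
rewrite /mono mnm_sumE -card_sumb; apply: eq_bigr => k _.
by rewrite mnm1E.
Qed.

Lemma mono_fiber i i0 : mono kap i = mono kap i0 ->
  exists2 p, p \in kgroup n kap & i = pim i0 p.
Proof.
move=> hm.
pose w (j : midx n d) (k : 'I_n) := ((inord (kap k) : 'I_Mb.+1), j k).
have cnt z : count_mem z [tuple w i k | k < n] = count_mem z [tuple w i0 k | k < n].
  rewrite /= !count_map !count_fenum_card.
  have e j : #|[pred k | w j k == z]| = (mono kap j) (enum_rank z).
    rewrite mono_count; apply: eq_card => k; rewrite !inE /var.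
    by rewrite (inj_eq enum_rank_inj).
  transitivity #|[pred k | w i k == z]|; first by apply: eq_card.
  rewrite e hm -e; by apply: eq_card.
have pe : perm_eq [tuple w i k | k < n] [tuple w i0 k | k < n].
  by apply/allP => z _; rewrite inE cnt.
have [p hp] := tuple_permP pe.
have ht : [tuple w i k | k < n] = [tuple tnth [tuple w i0 k | k < n] (p k) | k < n].
  exact: val_inj hp.
have ek k : w i k = w i0 (p k).
  by have := congr1 (fun t => tnth t k) ht; rewrite !tnth_mktuple.
exists p.
  apply/kgroupP => k; case: (ek k) => /(congr1 val) /= + _.
  by rewrite !inordK ?ltnS ?hk.
by apply/ffunP => k; rewrite ffunE; case: (ek k).
Qed.

Lemma Psi_nz x i0 : (forall p i, p \in kgroup n kap -> x (pim i p) = x i) ->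
  x i0 != 0 -> Psi kap x != 0.
Proof.
move=> sym nz; apply/negP => /eqP h0.
have := congr1 (mcoeff (mono kap i0)) h0.
rewrite /Psi raddf_sum /= mcoeff0.
under eq_bigr do rewrite mcoeffZ mcoeffX.
rewrite (bigID (fun i => mono kap i == mono kap i0)) /=.
rewrite [X in _ + X]big1 ?addr0; last by move=> i /negbTE ->; rewrite mulr0.
rewrite (eq_bigr (fun _ => x i0)); last first.
  move=> i /eqP /mono_fiber [p pG ->]; by rewrite sym // mono_pim // eqxx mulr1.
rewrite (eq_bigl (fun i => i \in [pred j | mono kap j == mono kap i0])) //.
rewrite sumr_const => /eqP; rewrite mulrn_eq0 (negbTE nz) orbF.
by rewrite (cardD1 i0) inE eqxx.
Qed.
End Psi.

Definition cmp d m n (i : midx n d) (f : 'I_m -> 'I_n) : midx m d :=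
  [ffun k => i (f k)].

Lemma tperm_map (T T' : finType) (f : T -> T') (a b k : T) : injective f ->
  tperm (f a) (f b) (f k) = f (tperm a b k).
Proof.
move=> fi; case: (tpermP a b k) => [->|->|nka nkb]; rewrite ?tpermL ?tpermR //.
by rewrite tpermD // (inj_eq fi) eq_sym; apply/eqP.
Qed.

Section Join.
Variable K : numClosedFieldType.
Variables n1 n2 n d : nat.
Variable f1 : 'I_n1 -> 'I_n.
Variable f2 : 'I_n2 -> 'I_n.
Definition Phi (u : 'I_n1 + 'I_n2) : 'I_n :=
  match u with inl a => f1 a | inr b => f2 b end.
Variable g : 'I_n -> 'I_n1 + 'I_n2.
Hypothesis Phig : cancel Phi g.
Hypothesis gPhi : cancel g Phi.

Lemma Phi_inj : injective Phi. Proof. exact: can_inj Phig. Qed.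
Lemma f1_inj : injective f1.
Proof. by move=> a b h; have := Phi_inj (x1 := inl a) (x2 := inl b) h; case. Qed.
Lemma f2_inj : injective f2.
Proof. by move=> a b h; have := Phi_inj (x1 := inr a) (x2 := inr b) h; case. Qed.
Lemma f12 a b : f1 a != f2 b.
Proof. by apply/eqP => h; have := Phi_inj (x1 := inl a) (x2 := inr b) h. Qed.

Definition J (i1 : midx n1 d) (i2 : midx n2 d) : midx n d :=
  [ffun k => match g k with inl a => i1 a | inr b => i2 b end].

Lemma cmpJ1 i1 i2 : cmp (J i1 i2) f1 = i1.
Proof.
by apply/ffunP => a; rewrite !ffunE (_ : g (f1 a) = inl a) // -[f1 a]/(Phi (inl a)) Phig.
Qed.
Lemma cmpJ2 i1 i2 : cmp (J i1 i2) f2 = i2.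
Proof.
by apply/ffunP => a; rewrite !ffunE (_ : g (f2 a) = inr a) // -[f2 a]/(Phi (inr a)) Phig.
Qed.
Lemma Jcmp i : J (cmp i f1) (cmp i f2) = i.
Proof.
apply/ffunP => k; rewrite !ffunE; case E: (g k) => [a|a]; rewrite ffunE -(gPhi k) E //.
Qed.

Lemma split_big (R : Type) (idx : R) (op : Monoid.com_law idx) (F : midx n d -> R) :
  \big[op/idx]_(i : midx n d) F i =
  \big[op/idx]_(i1 : midx n1 d) \big[op/idx]_(i2 : midx n2 d) F (J i1 i2).
Proof.
rewrite pair_big /=.
rewrite (reindex (fun p : midx n1 d * midx n2 d => J p.1 p.2)) //.
exists (fun i => (cmp i f1, cmp i f2)) => [[i1 i2] _|i _] /=.
  by rewrite cmpJ1 cmpJ2.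
exact: Jcmp.
Qed.

Lemma split_prod (R : Type) (idx : R) (op : Monoid.com_law idx) (G : 'I_n -> R) :
  \big[op/idx]_(k < n) G k =
  op (\big[op/idx]_(a < n1) G (f1 a)) (\big[op/idx]_(b < n2) G (f2 b)).
Proof.
rewrite (reindex Phi); last by exists g => u _; rewrite ?Phig ?gPhi.
by rewrite big_sumType.
Qed.

Definition join (x1 : midx n1 d -> K) (x2 : midx n2 d -> K) : midx n d -> K :=
  fun i => x1 (cmp i f1) * x2 (cmp i f2).

Variable Mb : nat.
Variables kap kap1 kap2 : nat -> nat.
Hypothesis hk1 : forall a : 'I_n1, kap (f1 a) = kap1 a.
Hypothesis hk2 : forall b : 'I_n2, kap (f2 b) = kap2 b.

Lemma mono_join (i : midx n d) :
  mono Mb kap i = mnm_add (mono Mb kap1 (cmp i f1)) (mono Mb kap2 (cmp i f2)).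
Proof.
rewrite /mono (split_prod (Monoid.ComLaw.clone _ _ mnm_add _)).
congr mnm_add; apply: eq_bigr => k _; by rewrite ffunE ?hk1 ?hk2.
Qed.

Lemma Psi_join x1 x2 :
  @Psi K d Mb n kap (join x1 x2) = @Psi K d Mb n1 kap1 x1 * @Psi K d Mb n2 kap2 x2.
Proof.
rewrite /Psi (split_big (Monoid.ComLaw.clone _ _ +%R _)) /=.
rewrite mulr_suml; apply: eq_bigr => i1 _.
rewrite mulr_sumr; apply: eq_bigr => i2 _.
rewrite /join mono_join cmpJ1 cmpJ2 mpolyXD.
by rewrite -scalerAl -scalerAr scalerA.
Qed.

Lemma tens_join (M : 'M[K]_d) x1 x2 :
  (forall i, tens_act M x1 i = x1 i) -> (forall i, tens_act M x2 i = x2 i) ->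
  forall i, tens_act M (join x1 x2) i = join x1 x2 i.
Proof.
move=> h1 h2 i; rewrite /join -h1 -h2 /tens_act.
rewrite (split_big (Monoid.ComLaw.clone _ _ +%R _)) /=.
rewrite mulr_suml; apply: eq_bigr => i1 _.
rewrite mulr_sumr; apply: eq_bigr => i2 _.
rewrite (split_prod (Monoid.ComLaw.clone _ _ *%R _)) /= cmpJ1 cmpJ2.
have e1 : \prod_(a < n1) M (i (f1 a)) (J i1 i2 (f1 a)) =
          \prod_(a < n1) M (cmp i f1 a) (i1 a).
  apply: eq_bigr => a _; have := congr1 (fun f : midx n1 d => f a) (cmpJ1 i1 i2).
  by rewrite /= !ffunE => ->.
have e2 : \prod_(a < n2) M (i (f2 a)) (J i1 i2 (f2 a)) =
          \prod_(a < n2) M (cmp i f2 a) (i2 a).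
  apply: eq_bigr => a _; have := congr1 (fun f : midx n2 d => f a) (cmpJ2 i1 i2).
  by rewrite /= !ffunE => ->.
rewrite e1 e2; by rewrite mulrACA.
Qed.

Lemma join_anti1 x1 x2 (a b : 'I_n1) i :
  (forall j, x1 (pim j (tperm a b)) = - x1 j) ->
  join x1 x2 (pim i (tperm (f1 a) (f1 b))) = - join x1 x2 i.
Proof.
move=> h; rewrite /join.
have -> : cmp (pim i (tperm (f1 a) (f1 b))) f1 = pim (cmp i f1) (tperm a b).
  by apply/ffunP => k; rewrite !ffunE tperm_map //; exact: f1_inj.
have -> : cmp (pim i (tperm (f1 a) (f1 b))) f2 = cmp i f2.
  by apply/ffunP => k; rewrite !ffunE tpermD // f12.
by rewrite h mulNr.
Qed.

Lemma join_anti2 x1 x2 (a b : 'I_n2) i :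
  (forall j, x2 (pim j (tperm a b)) = - x2 j) ->
  join x1 x2 (pim i (tperm (f2 a) (f2 b))) = - join x1 x2 i.
Proof.
move=> h; rewrite /join.
have -> : cmp (pim i (tperm (f2 a) (f2 b))) f2 = pim (cmp i f2) (tperm a b).
  by apply/ffunP => k; rewrite !ffunE tperm_map //; exact: f2_inj.
have -> : cmp (pim i (tperm (f2 a) (f2 b))) f1 = cmp i f1.
  by apply/ffunP => k; rewrite !ffunE tpermD // eq_sym f12.
by rewrite h mulrN.
Qed.
End Join.

Section Diagram.
Local Open Scope nat_scope.
Variable lam : seq nat.
Definition start r := sumn (take r lam).
Let P k := fun r => k < sumn (take r.+1 lam).

Lemma start_succ r : r < size lam -> start r.+1 = start r + nth 0 lam r.
Proof. by move=> h; rewrite /start (take_nth 0 h) sumn_rcons. Qed.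

Lemma start_le_succ r : start r <= start r.+1.
Proof.
case: (ltnP r (size lam)) => h; first by rewrite start_succ ?leq_addr.
by rewrite /start !take_oversize // (leq_trans h).
Qed.

Lemma start_mono r r' : r <= r' -> start r <= start r'.
Proof.
move=> /subnKC <-; elim: (r' - r) => [|m IH]; first by rewrite addn0.
by rewrite addnS (leq_trans IH) ?start_le_succ.
Qed.

Lemma start_size : start (size lam) = sumn lam.
Proof. by rewrite /start take_size. Qed.

Lemma find_eq (s : seq nat) (a : pred nat) r : r < size s -> a (nth 0 s r) ->
  (forall r', r' < r -> ~~ a (nth 0 s r')) -> find a s = r.
Proof.
move=> rs ar hb; case: (ltngtP (find a s) r) => // h.
  have hs : has a s by rewrite has_find (ltn_trans h).
  by move: (nth_find 0 hs); rewrite (negbTE (hb _ h)).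
by move: (before_find 0 h); rewrite ar.
Qed.

Lemma rowof_box r c : r < size lam -> c < nth 0 lam r ->
  rowof lam (start r + c) = r.
Proof.
move=> rs cr; rewrite /rowof; apply: find_eq; rewrite ?size_iota ?nth_iota //.
  by rewrite add0n -/(start r.+1) start_succ // ltn_add2l.
move=> r' hr'; rewrite nth_iota ?add0n ?(ltn_trans hr') // -/(start r'.+1).
by rewrite -leqNgt (leq_trans (start_mono hr')) ?leq_addr.
Qed.

Lemma colof_box r c : r < size lam -> c < nth 0 lam r ->
  colof lam (start r + c) = c.
Proof. by move=> rs cr; rewrite /colof rowof_box // addKn. Qed.

Lemma rowof_le k : rowof lam k <= size lam.
Proof. by rewrite /rowof -{2}(size_iota 0 (size lam)) find_size. Qed.

Lemma box_decomp k : k < sumn lam ->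
  [/\ rowof lam k < size lam, colof lam k < nth 0 lam (rowof lam k) &
      k = start (rowof lam k) + colof lam k].
Proof.
move=> ks.
have hs : has (fun r => k < sumn (take r.+1 lam)) (iota 0 (size lam)).
  case E: (size lam) => [|m].
    by move/eqP: E; rewrite size_eq0 => /eqP E; rewrite E in ks.
  apply/hasP; exists m; first by rewrite mem_iota add0n leq0n ltnSn.
  by rewrite /= -E take_size.
have rs : rowof lam k < size lam by rewrite /rowof; move: hs; rewrite has_find size_iota.
have h1 := nth_find 0 hs; rewrite nth_iota // add0n -/(rowof lam k) in h1.
rewrite -/(start _) start_succ // in h1.
have h2 : start (rowof lam k) <= k.
  case E: (rowof lam k) => [|r]; first by rewrite /start take0.
  have hr : r < find (fun r => k < sumn (take r.+1 lam)) (iota 0 (size lam)).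
    by rewrite -/(rowof lam k) E.
  have := before_find 0 hr; rewrite nth_iota ?add0n; last by apply: (ltn_trans (ltnSn r)); rewrite -E.
  by rewrite -/(start r.+1) => /negbT; rewrite -leqNgt.
split => //; rewrite /colof -/(start _).
  by rewrite ltn_subLR.
by rewrite subnKC.
Qed.
End Diagram.

Section Emb.
Local Open Scope nat_scope.
Variables lam lamT : seq nat.
Variable F : nat -> nat.
Hypothesis hsz : size lam = size lamT.
Hypothesis hF : forall r c, r < size lam -> c < nth 0 lam r -> F c < nth 0 lamT r.

Lemma emb_lt (k : 'I_(sumn lam)) :
  start lamT (rowof lam k) + F (colof lam k) < sumn lamT.
Proof.
have [rs cs _] := box_decomp (ltn_ord k).
have rT : rowof lam k < size lamT by rewrite -hsz.
apply: (leq_trans _ (_ : start lamT (size lamT) <= _)); last by rewrite start_size.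
apply: (leq_trans _ (start_mono _ rT)).
by rewrite start_succ // ltn_add2l hF.
Qed.

Definition emb (k : 'I_(sumn lam)) : 'I_(sumn lamT) := Ordinal (emb_lt k).

Lemma emb_row k : rowof lamT (emb k) = rowof lam k.
Proof.
have [rs cs _] := box_decomp (ltn_ord k).
by rewrite /= rowof_box // -?hsz // hF.
Qed.

Lemma emb_col k : colof lamT (emb k) = F (colof lam k).
Proof.
have [rs cs _] := box_decomp (ltn_ord k).
by rewrite /= colof_box // -?hsz // hF.
Qed.
End Emb.

Section DiagD.
Local Open Scope nat_scope.
Variable d : nat.

Lemma size_diagD j : size (diagD d j) = (d - 2).+1.
Proof. by rewrite /= size_nseq. Qed.

Lemma nth_diagD j r : r < size (diagD d j) ->
  nth 0 (diagD d j) r = if r == 0 then 2 * j else j.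
Proof. by case: r => [|r] //= h; rewrite nth_nseq -ltnS -(size_nseq (d - 2) j) h. Qed.

Lemma sumn_diagD j : sumn (diagD d j) = 2 * j + j * (d - 2).
Proof. by rewrite /= sumn_nseq. Qed.

Lemma nth_diagD_le j r : nth 0 (diagD d j) r <= 2 * j.
Proof.
case: (ltnP r (size (diagD d j))) => h; last by rewrite nth_default.
rewrite nth_diagD //; case: (r == 0) => //; lia.
Qed.
End DiagD.

Section Spec.
Local Open Scope nat_scope.
Variables d j : nat.
Definition F1 c := if c < j then c else c + 2.
Definition F2 c := if c < 2 then j + c else 2 * j + c.
Local Notation la := (diagD d j).
Local Notation mu := (diagD d 2).
Local Notation lt := (diagD d j.+2).

Lemma hszl : size la = size lt. Proof. by rewrite !size_diagD. Qed.
Lemma hszm : size mu = size lt. Proof. by rewrite !size_diagD. Qed.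

Lemma hF1 r c : r < size la -> c < nth 0 la r -> F1 c < nth 0 lt r.
Proof.
move=> h; rewrite !nth_diagD -?hszl //; rewrite /F1.
case: (r == 0) => /=; case: (ltnP c j) => ? ?; lia.
Qed.

Lemma hF2 r c : r < size mu -> c < nth 0 mu r -> F2 c < nth 0 lt r.
Proof.
move=> h; rewrite !nth_diagD -?hszm //; rewrite /F2.
case: (r == 0) => /=; case: (ltnP c 2) => ? ?; lia.
Qed.

Definition e1 := emb hszl hF1.
Definition e2 := emb hszm hF2.

Lemma F1_inj : injective F1.
Proof. move=> a b; rewrite /F1; case: (ltnP a j) => ?; case: (ltnP b j) => ?; lia. Qed.
Lemma F2_inj : injective F2.
Proof. move=> a b; rewrite /F2; case: (ltnP a 2) => ?; case: (ltnP b 2) => ?; lia. Qed.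
Lemma F12 c c' : c < 2 * j -> F1 c <> F2 c'.
Proof. rewrite /F1 /F2; case: (ltnP c j) => ?; case: (ltnP c' 2) => ?; lia. Qed.

Lemma col_lt (a : 'I_(sumn la)) : colof la a < 2 * j.
Proof.
have [_ cs _] := box_decomp (ltn_ord a).
exact: leq_trans cs (nth_diagD_le _ _ _).
Qed.

Lemma e1_inj : injective e1.
Proof.
move=> a b h.
have hr : rowof la a = rowof la b.
  by rewrite -(emb_row hszl hF1) -/(e1 a) h emb_row.
have hc : colof la a = colof la b.
  by apply: F1_inj; rewrite -(emb_col hszl hF1) -/(e1 a) h emb_col.
have [_ _ ea] := box_decomp (ltn_ord a).
have [_ _ eb] := box_decomp (ltn_ord b).
by apply: val_inj; rewrite /= ea eb hr hc.
Qed.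

Lemma e2_inj : injective e2.
Proof.
move=> a b h.
have hr : rowof mu a = rowof mu b.
  by rewrite -(emb_row hszm hF2) -/(e2 a) h emb_row.
have hc : colof mu a = colof mu b.
  by apply: F2_inj; rewrite -(emb_col hszm hF2) -/(e2 a) h emb_col.
have [_ _ ea] := box_decomp (ltn_ord a).
have [_ _ eb] := box_decomp (ltn_ord b).
by apply: val_inj; rewrite /= ea eb hr hc.
Qed.

Lemma e12 a b : e1 a <> e2 b.
Proof.
move=> h; apply: (F12 (col_lt a) (c' := colof mu b)).
by rewrite -(emb_col hszl hF1) -(emb_col hszm hF2) -/(e1 a) -/(e2 b) h.
Qed.

Lemma colPhi u : colof lt (Phi e1 e2 u) =
  match u with inl a => F1 (colof la a) | inr b => F2 (colof mu b) end.
Proof. by case: u => a; [exact: (emb_col hszl hF1) | exact: (emb_col hszm hF2)]. Qed.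

Lemma Phi_inj0 : injective (Phi e1 e2).
Proof.
case=> a [] b //= h.
- by rewrite (e1_inj h).
- by case: (e12 h).
- by case: (e12 (esym h)).
- by rewrite (e2_inj h).
Qed.

Lemma Phi_bij0 : bijective (Phi e1 e2).
Proof.
apply: inj_card_bij; first exact: Phi_inj0.
rewrite card_sum !card_ord !sumn_diagD; lia.
Qed.
End Spec.
Local Open Scope ring_scope.

Section Main.
Variable K : numClosedFieldType.
Variable d : nat.
Variable Q : 'M[K]_d -> Prop.

Definition PL (lam : seq nat) := exists v : midx (sumn lam) d -> K,
  (exists i, @young_sym K lam d v i != 0) /\
  forall M, Q M -> forall i, tens_act M (@young_sym K lam d v) i = @young_sym K lam d v i.

Lemma young_symE lam (v : midx (sumn lam) d -> K) i :
  @young_sym K lam d v i =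
  Wop (kgroupG _ (rowof lam)) (fun _ => 1) (Wop (kgroupG _ (colof lam)) (@sgn K _) v) i.
Proof. by apply: eq_bigr => p _; rewrite mul1r. Qed.

Let oneM : forall p q : 'S_(0), (fun _ => 1 : K) (p * q)%g = 1 * 1.
Proof. by move=> *; rewrite mulr1. Qed.

Lemma extract lam : PL lam -> exists s : midx (sumn lam) d -> K,
  [/\ exists i, Wop (kgroupG _ (rowof lam)) (fun _ => 1) s i != 0,
      forall M, Q M -> forall i, tens_act M s i = s i &
      forall q i, q \in kgroup _ (colof lam) -> s (pim i q) = @sgn K _ q * s i].
Proof.
move=> [v [[i0 nz] inv]].
pose GR := kgroupG (sumn lam) (rowof lam); pose GC := kgroupG (sumn lam) (colof lam).
exists (Wop GC (@sgn K _) (Wop GR (fun _ => 1) (Wop GC (@sgn K _) v))); split.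
- by apply: (nonvanish (i0 := i0)); rewrite -young_symE.
- move=> M QM i; rewrite Wop_tens; apply: Wop_ext => i'.
  rewrite -young_symE -(inv M) //; apply: tens_ext => ?; by rewrite young_symE.
- by move=> q i qG; rewrite Wop_pim //; [apply: sgnM|apply: sgn2].
Qed.

Lemma tperm_kgroup n (kap : nat -> nat) (a b : 'I_n) : kap a = kap b ->
  tperm a b \in kgroup n kap.
Proof. by move=> h; apply/kgroupP => k; case: tpermP => [->|->|]. Qed.

Lemma main_gen j : PL (diagD d j) -> PL (diagD d 2) -> PL (diagD d j.+2).
Proof.
move=> /extract [s1 [[i1 nz1] inv1 anti1]] /extract [s2 [[i2 nz2] inv2 anti2]].
have [g Pg gP] := Phi_bij0 d j.
pose y := join (@e1 d j) (@e2 d j) s1 s2.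
pose GR := kgroupG (sumn (diagD d j.+2)) (rowof (diagD d j.+2)).
pose GC := kgroupG (sumn (diagD d j.+2)) (colof (diagD d j.+2)).
have hy : forall a b : 'I_(sumn (diagD d j.+2)), a != b ->
    colof (diagD d j.+2) a = colof (diagD d j.+2) b ->
    forall i, y (pim i (tperm a b)) = - y i.
  move=> a b ab cab i.
  rewrite -(gP a) -(gP b) in ab cab *.
  rewrite !colPhi in cab.
  case: (g a) ab cab => a1; case: (g b) => b1 ab cab.
  - apply: (join_anti1 Pg) => j'.
    have cc := F1_inj cab.
    rewrite anti1 ?tperm_kgroup // /sgn odd_tperm.
    have -> : (a1 != b1) by apply: contraNneq ab => ->.
    by rewrite expr1 mulN1r.
  - by exfalso; apply: (F12 (col_lt a1)) cab.
  - by exfalso; apply: (F12 (col_lt b1)) (esym cab).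
  - apply: (join_anti2 Pg) => j'.
    have cc := F2_inj cab.
    rewrite anti2 ?tperm_kgroup // /sgn odd_tperm.
    have -> : (a1 != b1) by apply: contraNneq ab => ->.
    by rewrite expr1 mulN1r.
have By : forall i, Wop GC (@sgn K _) y i = #|GC|%:R * y i.
  move=> i; rewrite /Wop (eq_bigr (fun _ => y i)) ?sumr_const ?mulr_natl // => q qG.
  by rewrite (antisym_all hy i qG) mulrA sgn2 mul1r.
exists y; split.
- case: (boolP [exists i, @young_sym K (diagD d j.+2) d y i != 0]) => [/existsP //|/existsPn h].
  exfalso.
  pose Mb := (d - 2).+1.
  have hk : forall jj k, (rowof (diagD d jj) k <= Mb)%N.
    by move=> jj k; rewrite /Mb -(size_diagD d jj) rowof_le.
  have P0 : @Psi K d Mb _ (rowof (diagD d j.+2)) (@young_sym K (diagD d j.+2) d y) = 0.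
    rewrite (@Psi_ext K d Mb _ (rowof (diagD d j.+2)) _ (fun _ => 0)); last by move=> i; apply/eqP; rewrite -[_ == _]negbK h.
    by apply: big1 => i _; rewrite scale0r.
  rewrite (@Psi_ext K d Mb _ (rowof (diagD d j.+2)) _ (Wop GR (fun _ => 1) (Wop GC (@sgn K _) y))) in P0; last first.
    by move=> i; rewrite young_symE.
  rewrite Psi_sym (@Psi_ext K d Mb _ (rowof (diagD d j.+2)) _ (fun i => #|GC|%:R * y i)) // Psi_scale in P0.
  rewrite (Psi_join Pg gP Mb (kap1 := rowof (diagD d j)) (kap2 := rowof (diagD d 2))) in P0;
    last 2 first.
  + by move=> a; rewrite /e1 emb_row.
  + by move=> a; rewrite /e2 emb_row.
  have nzP (jj : nat) (s : midx (sumn (diagD d jj)) d -> K) i0 :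
      Wop (kgroupG _ (rowof (diagD d jj))) (fun _ => 1) s i0 != 0 ->
      @Psi K d Mb _ (rowof (diagD d jj)) s != 0.
    move=> nz.
    have sym : forall p i, p \in kgroup _ (rowof (diagD d jj)) ->
        Wop (kgroupG _ (rowof (diagD d jj))) (fun _ => 1) s (pim i p) =
        Wop (kgroupG _ (rowof (diagD d jj))) (fun _ => 1) s i.
      by move=> p i pG; rewrite Wop_pim // ?mul1r // => *; rewrite mulr1.
    have := Psi_nz (hk jj) sym nz.
    by rewrite Psi_sym scaler_eq0 negb_or => /andP [].
  have cg : forall G : {group 'S_(sumn (diagD d j.+2))}, (#|G| == 0)%N = false.
    by move=> G; apply/negbTE; rewrite -lt0n cardG_gt0.
  move/eqP: P0; rewrite !scaler_eq0 mulf_eq0 !pnatr_eq0 (cg GR) (cg GC).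
  by rewrite (negbTE (nzP _ _ _ nz1)) (negbTE (nzP _ _ _ nz2)).
- move=> M QM i.
  transitivity (tens_act M (Wop GR (fun _ => 1) (Wop GC (@sgn K _) y)) i).
    by apply: tens_ext => ?; rewrite young_symE.
  rewrite Wop_tens young_symE; apply: Wop_ext => i'.
  rewrite Wop_tens; apply: Wop_ext => i''.
  exact: (tens_join Pg gP (inv1 M QM) (inv2 M QM)).
Qed.
End Main.
End Dev.
Import Dev.

Theorem mainTheorem7 (R : realType) (dA dB j : nat) :
  (2 <= dA)%N -> (2 <= dB)%N ->
  restr_contains_trivial R dA dB (diagD (dA * dB) j) ->
  restr_contains_trivial R dA dB (diagD (dA * dB) 2) ->
  restr_contains_trivial R dA dB (diagD (dA * dB) j.+2).
Proof.
move=> _ _ H1 H2.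
pose Q := fun M : 'M[R[i]]_(dA * dB) =>
  exists UA, exists UB, [/\ UA \in @SU R dA, UB \in @SU R dB & M = UA *t UB].
have conv : forall lam, restr_contains_trivial R dA dB lam <-> PL Q lam.
  move=> lam; split.
    move=> [v [nz inv]]; exists v; split => // M [UA [UB [hA hB ->]]].
    exact: inv.
  move=> [v [nz inv]]; exists v; split => // UA UB hA hB.
  by apply: inv; exists UA, UB.
apply/conv; apply: main_gen; exact/conv.
Qed.
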